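(* Let $m$ be an integer with $m \equiv 1 \pmod 4$ and $m \ge 5$, and let $n = 3^m - 1$. Then: (i) the ternary cyclic code $\mathcal{C}_{(0,3,m)}$ has length $n$ and dimension $(n+2)/2$, and the ternary cyclic code $\mathcal{C}_{(1,2,m)}$ has length $n$ and dimension $n/2$; (ii) the ternary cyclic code $\mathcal{C}_{(2,3,m)}$ has length $n$ and dimension $(n+2)/2$, and the ternary cyclic code $\mathcal{C}_{(0,1,m)}$ has length $n$ and dimension $n/2$.
   Context: Let $m \ge 2$ be an integer, $n = 3^m-1$, and let $\alpha$ be a primitive element of $\mathbb{F}_{3^m}$. For an integer $0 \le j \le n-1$ with $3$-adic expansion $j = \sum_{t=0}^{m-1} j_t 3^t$, $j_t \in \{0,1,2\}$, let $w_3(j) = \sum_{t=0}^{m-1} j_t$. For distinct $i_1, i_2 \in \{0,1,2,3\}$ let $T_{(i_1,i_2,m)} = \{1 \le j \le n-1 : w_3(j) \equiv i_1 \text{ or } i_2 \pmod 4\}$ and $g_{(i_1,i_2,m)}(x) = \prod_{j \in T_{(i_1,i_2,m)}} (x - \alpha^j) \in \mathbb{F}_3[x]$. $\mathcal{C}_{(i_1,i_2,m)}$ denotes the ternary cyclic code of length $n$ with generator polynomial $g_{(i_1,i_2,m)}(x)$, i.e. the ideal generated by $g_{(i_1,i_2,m)}(x)$ in $\mathbb{F}_3[x]/(x^n-1)$. *)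

(* Defs.v *)
From HB Require Import structures.
From mathcomp Require Import all_boot all_order all_algebra all_field.
Set Implicit Arguments. Unset Strict Implicit. Unset Printing Implicit Defensive.
Import GRing.Theory.
Local Open Scope ring_scope.

Definition w3 (m j : nat) : nat := (\sum_(t < m) (j %/ 3 ^ t) %% 3)%N.

Definition Tset (i1 i2 m : nat) : seq nat :=
  [seq j <- index_iota 1 (3 ^ m - 1)%N | ((w3 m j %% 4 == i1)%N || (w3 m j %% 4 == i2)%N)].

Definition gpoly (L : fieldExtType 'F_3) (alpha : L) (i1 i2 m : nat) : {poly L} :=
  \prod_(j <- Tset i1 i2 m) ('X - (alpha ^+ j)%:P).

(* codewords of the cyclic code of length n generated by g: the vector
   (c_0, ..., c_{n-1}) such that c_0 + c_1 x + ... + c_{n-1} x^{n-1} lies in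
   the ideal (g) of F_3[x]/(x^n - 1) *)
Definition is_codeword (n : nat) (g : {poly 'F_3}) (c : 'rV['F_3]_n) : Prop :=
  exists f : {poly 'F_3}, rVpoly c = (f * g) %% ('X^n - 1).

Definition code_has_dim (n : nat) (g : {poly 'F_3}) (k : nat) : Prop :=
  exists B : seq 'rV['F_3]_n,
    [/\ free B, size B = k & forall c, is_codeword g c <-> c \in <<B>>%VS].

(* Main.v *)
Require Import Defs.
From HB Require Import structures.
From mathcomp Require Import all_boot all_order all_algebra all_field.
From mathcomp Require Import zify.
Lemma w3S m j : w3 m.+1 j = (j %% 3 + w3 m (j %/ 3))%N.
Proof. rewrite /w3 big_ord_recl /= expn0 divn1; congr (_ + _)%N.
by apply eq_bigr => t _; rewrite /bump /= add1n expnS divnMA. Qed.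
Lemma count3 (P : pred nat) K : count P (iota 0 (3*K)) =
  (count (fun j => P (3*j)) (iota 0 K) + count (fun j => P (3*j+1)) (iota 0 K) + count (fun j => P (3*j+2)) (iota 0 K))%N.
Proof.
elim: K => [//|K IH]. rewrite mulnSr iotaD -(addn1 K) iotaD !count_cat IH /= add0n addn1 addn2 addn0.
rewrite !add0n !addn0; lia. Qed.
Definition Nc m r := count (fun j => w3 m j %% 4 == r) (iota 0 (3^m)).
Lemma shiftc m d r : d < 3 -> r < 4 -> count (fun j => ((3*j+d) %% 3 + w3 m ((3*j+d) %/ 3)) %% 4 == r) (iota 0 (3^m)) = Nc m ((r + 4 - d) %% 4).
Proof. move=> hd hr; apply: eq_count => j /=.
have -> : (3*j+d) %% 3 = d by lia.
have -> : (3*j+d) %/ 3 = j by lia.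
by apply/idP/idP => /eqP H; apply/eqP; lia. Qed.
Lemma NcS m r : r < 4 -> Nc m.+1 r = Nc m r + Nc m ((r + 3) %% 4) + Nc m ((r + 2) %% 4).
Proof. move=> hr; rewrite {1}/Nc expnS count3.
rewrite (eq_count (a2 := fun j => ((3*j+0) %% 3 + w3 m ((3*j+0) %/ 3)) %% 4 == r)); last by move=> j /=; rewrite w3S addn0.
rewrite (eq_count (a1 := fun j => w3 m.+1 (3*j+1) %% 4 == r) (a2 := fun j => ((3*j+1) %% 3 + w3 m ((3*j+1) %/ 3)) %% 4 == r)); last by move=> j /=; rewrite w3S.
rewrite (eq_count (a1 := fun j => w3 m.+1 (3*j+2) %% 4 == r) (a2 := fun j => ((3*j+2) %% 3 + w3 m ((3*j+2) %/ 3)) %% 4 == r)); last by move=> j /=; rewrite w3S.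
rewrite !shiftc //.
have -> : (r + 4 - 0) %% 4 = r by lia.
have -> : (r + 4 - 1) %% 4 = (r + 3) %% 4 by lia.
by have -> : (r + 4 - 2) %% 4 = (r + 2) %% 4 by lia.
Qed.
Lemma NcS' m : (Nc m.+1 0 = Nc m 0 + Nc m 3 + Nc m 2) * (Nc m.+1 1 = Nc m 1 + Nc m 0 + Nc m 3)
 * (Nc m.+1 2 = Nc m 2 + Nc m 1 + Nc m 0) * (Nc m.+1 3 = Nc m 3 + Nc m 2 + Nc m 1).
Proof. by rewrite !NcS. Qed.
Lemma Nc_inv m : let a0 := Nc m 0 in let a1 := Nc m 1 in let a2 := Nc m 2 in let a3 := Nc m 3 in
  (a0 + a1 + a2 + a3 = 3^m) /\ (a0 + a2 = a1 + a3 + 1) /\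
     (m %% 4 = 0 -> a0 = a2 + 1 /\ a1 = a3) /\ (m %% 4 = 1 -> a0 = a2 /\ a1 = a3 + 1) /\
     (m %% 4 = 2 -> a2 = a0 + 1 /\ a1 = a3) /\ (m %% 4 = 3 -> a0 = a2 /\ a3 = a1 + 1).
Proof.
elim: m => [|m [IH1 [IH2 [IH3 [IH4 [IH5 IH6]]]]]] /=; first by rewrite /Nc /w3 /= !big_ord0.
rewrite !NcS' expnS.
have : m %% 4 = 0 \/ m %% 4 = 1 \/ m %% 4 = 2 \/ m %% 4 = 3 by lia.
case=> [h|[h|[h|h]]].
- move: (IH3 h) => [? ?]; lia.
- move: (IH4 h) => [? ?]; lia.
- move: (IH5 h) => [? ?]; lia.
- move: (IH6 h) => [? ?]; lia.
Qed.
Lemma w3_0 m : w3 m 0 = 0.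
Proof. by rewrite /w3 big1 // => t _; rewrite div0n mod0n. Qed.
Lemma w3_top m : w3 m (3^m - 1) = 2 * m.
Proof.
elim: m => [|m IH]; first by rewrite /w3 big_ord0.
rewrite w3S.
have e1 : (3 ^ m.+1 - 1) %% 3 = 2 by rewrite expnS; have := expn_gt0 3 m; lia.
have e2 : (3 ^ m.+1 - 1) %/ 3 = 3^m - 1 by rewrite expnS; have := expn_gt0 3 m; lia.
rewrite e1 e2 IH; lia.
Qed.
Lemma count_or (f : nat -> nat) i1 i2 s : i1 != i2 ->
  count (fun j => (f j == i1) || (f j == i2)) s = count (fun j => f j == i1) s + count (fun j => f j == i2) s.
Proof. move=> ne; elim: s => //= x s ->.
case: eqP => [->|_]; case: eqP => [e|_] //=; last lia.
by move: ne; rewrite e eqxx. Qed.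
Lemma Tset_count i1 i2 m : i1 != i2 -> 0 < m ->
  Nc m i1 + Nc m i2 = size (Tset i1 i2 m) + ((0 == i1) || (0 == i2)) + ((2 * m %% 4 == i1) || (2 * m %% 4 == i2)).
Proof.
move=> ne m0; rewrite /Tset size_filter /Nc -count_or //.
have h3 : 3 <= 3^m by rewrite -{1}(expn1 3) leq_pexp2l.
have -> : 3 ^ m = 1 + ((3^m - 2) + 1) by lia.
rewrite iotaD iotaD !count_cat /= w3_0 mod0n.
have -> : 1 + (3^m - 2) = 3^m - 1 by lia.
rewrite w3_top /index_iota.
have -> : 1 + (3 ^ m - 2 + 1) - 1 - 1 = 3^m - 2 by lia.
rewrite add0n.
lia.
Qed.
Lemma sizes m : m %% 4 = 1 -> 5 <= m -> let n := 3^m - 1 in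
  (n - size (Tset 0 3 m) = (n + 2) %/ 2 /\ n - size (Tset 1 2 m) = n %/ 2) /\
  (n - size (Tset 2 3 m) = (n + 2) %/ 2 /\ n - size (Tset 0 1 m) = n %/ 2).
Proof.
move=> h1 h5 n.
have [I1 [I2 [_ [I4 _]]]] := Nc_inv m.
have [e1 e2] := I4 h1.
have hm : 2 * m %% 4 = 2 by lia.
have c03 := @Tset_count 0 3 m isT (ltn_trans (isT : 0 < 4) h5).
have c12 := @Tset_count 1 2 m isT (ltn_trans (isT : 0 < 4) h5).
have c23 := @Tset_count 2 3 m isT (ltn_trans (isT : 0 < 4) h5).
have c01 := @Tset_count 0 1 m isT (ltn_trans (isT : 0 < 4) h5).
rewrite hm /= in c03 c12 c23 c01.
rewrite /n; lia.
Qed.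
Local Open Scope ring_scope.
Import GRing.Theory.
Import GRing.Theory.
Section CD.
Variables (n : nat) (g : {poly 'F_3}).
Hypotheses (n0 : (0 < n)%N) (gm : g \is monic) (gd : g %| 'X^n - 1).
Let k := (n - (size g).-1)%N.
Let B : seq 'rV['F_3]_n := [seq poly_rV ('X^i * g) | i <- iota 0 k].
Lemma g0 : g != 0. Proof. exact: monic_neq0. Qed.
Lemma sg : (size g <= n.+1)%N.
Proof. have <- : size ('X^n - 1 : {poly 'F_3}) = n.+1 by rewrite -polyC1 size_XnsubC.
apply: dvdp_leq gd; rewrite -size_poly_eq0 -polyC1 size_XnsubC //. Qed.
Lemma sizeok (h : {poly 'F_3}) : (size h <= k)%N -> (size (h * g)%R <= n)%N.
Proof. move=> hk; have := size_polyMleq h g; have := sg; have := g0; rewrite -size_poly_eq0; rewrite /k in hk; lia. Qed.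
Lemma sizerV (c : 'rV['F_3]_n) : (size (rVpoly c) <= n)%N.
Proof. exact: size_poly. Qed.
Lemma cw_iff (c : 'rV['F_3]_n) : is_codeword g c <-> g %| rVpoly c.
Proof. split.
- by case=> f ->; rewrite -dvdp_mod //; apply: dvdp_mull.
- move=> hd; exists (rVpoly c %/ g); rewrite divpK // modp_small //.
  by rewrite -polyC1 size_XnsubC // ltnS sizerV.
Qed.
Lemma span_iff (c : 'rV['F_3]_n) : c \in <<B>>%VS <-> g %| rVpoly c.
Proof. split.
- move=> /coord_span ->; rewrite linear_sum /=.
  apply: (big_ind (fun v : {poly 'F_3} => g %| v)); first by rewrite dvdp0.
  + by move=> x y; apply: dvdp_add.
  move=> i _; rewrite linearZ /= -mul_polyC; apply: dvdp_mull.
  have hi : (i < size B)%N by rewrite size_map size_iota.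
  rewrite (nth_map 0%N); last by move: hi; rewrite size_map.
  rewrite poly_rV_K; first by apply: dvdp_mull.
  by rewrite nth_iota // add0n; apply: sizeok; rewrite size_polyXn; exact: ltn_ord i.
- move=> hd; set h := rVpoly c %/ g.
  have ehg : h * g = rVpoly c by rewrite divpK.
  have hk : (size h <= k)%N.
    have [->|hn0] := eqVneq h 0; first by rewrite size_poly0.
    have := sizerV c; rewrite -ehg size_mul // ?g0 //; have := sg; have := g0; rewrite -size_poly_eq0 /k; case: (size g) => //= a _ _; rewrite addnS /=; move=> H; rewrite leq_subRL ?(addnC a) //; exact: leq_trans (leq_addl _ _) H.
  rewrite -[c]rVpolyK -ehg -[h]coefK poly_def mulr_suml linear_sum /=.
  apply: rpred_sum => i _; rewrite -scalerAl linearZ /=; apply: rpredZ.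
  apply: memv_span; apply: map_f; by rewrite mem_iota /= add0n (leq_trans (ltn_ord i) hk).
Qed.
Lemma freeB : free B.
Proof.
apply/(@freeP _ _ _ (in_tuple B)) => a /(congr1 rVpoly); rewrite linear_sum linear0.
under eq_bigr => i _.
  rewrite linearZ /= (nth_map 0%N); last by apply: leq_trans (ltn_ord i) _; rewrite size_map.
  rewrite nth_iota ?add0n; last by apply: leq_trans (ltn_ord i) _; rewrite size_map size_iota.
  rewrite poly_rV_K; last first.
    by apply: sizeok; rewrite size_polyXn; apply: leq_trans (ltn_ord i) _; rewrite size_map size_iota.
  rewrite scalerAl.
  over.
rewrite -mulr_suml => /eqP; rewrite mulf_eq0 (negbTE g0) orbF => /eqP H j.
have := congr1 (fun p : {poly 'F_3} => p`_j) H; rewrite coef_sum coef0 (bigD1 j) //= big1.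
  by rewrite addr0 coefZ coefXn eqxx mulr1.
move=> i ij; rewrite coefZ coefXn.
have -> : (nat_of_ord j == nat_of_ord i) = false by rewrite eq_sym; apply/negbTE.
by rewrite mulr0.
Qed.
Lemma code_dim : code_has_dim n g k.
Proof.
exists B; split; first exact: freeB; first by rewrite size_map size_iota.
by move=> c; rewrite cw_iff span_iff.
Qed.
End CD.
Lemma gprops (m : nat) (L : fieldExtType 'F_3) (alpha : L) i1 i2 (g : {poly 'F_3}) :
  (3^m-1).-primitive_root alpha -> map_poly (GRing.in_alg L) g = gpoly alpha i1 i2 m ->
  [/\ g \is monic, g %| 'X^(3^m-1) - 1 & (size g).-1 = size (Tset i1 i2 m)].
Proof.
move=> pa hg; split.
- rewrite monicE; apply/eqP; apply: (fmorph_inj (GRing.in_alg L)).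
  by rewrite -lead_coef_map hg rmorph1; apply/eqP; apply: monic_prod_XsubC.
- rewrite -(dvdp_map (GRing.in_alg L)) hg rmorphB /= map_polyXn rmorph1.
  rewrite /gpoly -(big_map (fun j => alpha ^+ j) xpredT (fun z => 'X - z%:P)).
  apply: uniq_roots_dvdp.
  + apply/allP => z /mapP [j _ ->]; rewrite rootE !hornerE -exprM mulnC exprM.
    by rewrite (prim_expr_order pa) expr1n subrr.
  + rewrite uniq_rootsE map_inj_in_uniq ?filter_uniq ?iota_uniq //.
    move=> j1 j2; rewrite !mem_filter !mem_iota => /andP [_ /andP [_ h1]] /andP [_ /andP [_ h2]] /eqP.
    have := prim_order_gt0 pa; move: (3^m - 1)%N pa h1 h2 => [|N] // pa h1 h2 _.
    rewrite subn1 /= add1n in h1 h2.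
    by rewrite (eq_prim_root_expr pa) !modn_small // => /eqP.
- by rewrite -(size_map_poly (GRing.in_alg L)) hg /gpoly size_prod_XsubC.
Qed.
Theorem theorem2 (m : nat) (L : fieldExtType 'F_3) (alpha : L)
  (g03 g12 g23 g01 : {poly 'F_3}) :
  (m %% 4 = 1)%N -> (5 <= m)%N ->
  \dim {: L} = m ->
  (3 ^ m - 1).-primitive_root alpha ->
  map_poly (GRing.in_alg L) g03 = gpoly alpha 0 3 m ->
  map_poly (GRing.in_alg L) g12 = gpoly alpha 1 2 m ->
  map_poly (GRing.in_alg L) g23 = gpoly alpha 2 3 m ->
  map_poly (GRing.in_alg L) g01 = gpoly alpha 0 1 m ->
  let n := (3 ^ m - 1)%N in
  (code_has_dim n g03 ((n + 2) %/ 2) /\ code_has_dim n g12 (n %/ 2)) /\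
  (code_has_dim n g23 ((n + 2) %/ 2) /\ code_has_dim n g01 (n %/ 2)).
Proof.
move=> h1 h5 _ pa e03 e12 e23 e01 n.
have [[s03 s12] [s23 s01]] := @sizes m h1 h5.
have n0 : (0 < n)%N by have := prim_order_gt0 pa.
have [m03 d03 z03] := @gprops _ _ _ _ _ _ pa e03.
have [m12 d12 z12] := @gprops _ _ _ _ _ _ pa e12.
have [m23 d23 z23] := @gprops _ _ _ _ _ _ pa e23.
have [m01 d01 z01] := @gprops _ _ _ _ _ _ pa e01.
have c03 := @code_dim _ _ n0 m03 d03; rewrite z03 s03 in c03.
have c12 := @code_dim _ _ n0 m12 d12; rewrite z12 s12 in c12.
have c23 := @code_dim _ _ n0 m23 d23; rewrite z23 s23 in c23.
have c01 := @code_dim _ _ n0 m01 d01; rewrite z01 s01 in c01.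
by split; split.
Qed.
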